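(* Let $r\ge1$ and let $\tau$ be a permutation of $F^r$ with $\tau(\mathbf 0)=\mathbf 0$. The Steiner quadruple system $SQS_\tau$ is point transitive if and only if $\tau^{-1}\in\mathrm{GL}(r,2)\,\tau\,\mathrm{GL}(r,2)$, i.e. there are $A,B\in\mathrm{GL}(r,2)$ with $\tau^{-1}(x)=A\tau(Bx)$ for all $x\in F^r$.
   Context: $F=\mathrm{GF}(2)$, $\mathbf 0$ is the all-zero vector. The point set consists of the $2^{r+1}$ symbols $(\{a\},\emptyset)$ and $(\emptyset,\{a\})$, $a\in F^r$; a pair $(X,Y)$ with $X,Y\subseteq F^r$ denotes the set of points $\{(\{x\},\emptyset):x\in X\}\cup\{(\emptyset,\{y\}):y\in Y\}$. $SQS_\tau=Q_0\cup Q_1\cup Q_\tau$ where $Q_0=\{(\{a,b,c,d\},\emptyset): a,b,c,d\in F^r \text{ pairwise distinct}, a+b+c+d=\mathbf 0\}$, $Q_1=\{(\emptyset,\{a,b,c,d\}): a,b,c,d\in F^r \text{ pairwise distinct}, a+b+c+d=\mathbf 0\}$, $Q_\tau=\{(\{a,c\},\{b,d\}): a,b,c,d\in F^r, \tau(a+c)=b+d\neq\mathbf 0\}$. A Steiner quadruple system is point transitive if its automorphism group (permutations of points preserving the set of quadruples) acts transitively on its points. *)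

(* Defs.v *)
From mathcomp Require Import all_boot all_order all_algebra all_fingroup.
Set Implicit Arguments. Unset Strict Implicit. Unset Printing Implicit Defensive.
Import GRing.Theory.
Local Open Scope ring_scope.

Definition vec (r : nat) := 'cV['F_2]_r.

(* Points: inl a = ({a},emptyset), inr a = (emptyset,{a}) *)
Definition point (r : nat) := (vec r + vec r)%type.

Definition distinct4 (r : nat) (a b c d : vec r) : bool :=
  [&& a != b, a != c, a != d, b != c, b != d & c != d].

Definition Q0 (r : nat) : {set {set point r}} :=
  [set Q | [exists a : vec r, exists b : vec r, exists c : vec r, exists d : vec r,
     [&& distinct4 a b c d, a + b + c + d == 0 &
         Q == [set inl a; inl b; inl c; inl d]]]].

Definition Q1 (r : nat) : {set {set point r}} :=
  [set Q | [exists a : vec r, exists b : vec r, exists c : vec r, exists d : vec r,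
     [&& distinct4 a b c d, a + b + c + d == 0 &
         Q == [set inr a; inr b; inr c; inr d]]]].

Definition Qtau (r : nat) (tau : {perm vec r}) : {set {set point r}} :=
  [set Q | [exists a : vec r, exists b : vec r, exists c : vec r, exists d : vec r,
     [&& tau (a + c) == b + d, b + d != 0 &
         Q == [set inl a; inl c; inr b; inr d]]]].

Definition SQS (r : nat) (tau : {perm vec r}) : {set {set point r}} :=
  Q0 r :|: Q1 r :|: Qtau tau.

Definition is_automorphism (r : nat) (tau : {perm vec r}) (g : {perm point r}) : Prop :=
  forall Q : {set point r}, (g @: Q \in SQS tau) = (Q \in SQS tau).

Definition point_transitive (r : nat) (tau : {perm vec r}) : Prop :=
  forall x y : point r, exists g : {perm point r}, is_automorphism tau g /\ g x = y.

(* Main.v *)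
Require Import Defs.
From mathcomp Require Import all_boot all_order all_algebra all_fingroup.
Import GRing.Theory.
Local Open Scope ring_scope.
Set Implicit Arguments. Unset Strict Implicit. Unset Printing Implicit Defensive.

Lemma addFF (x : 'F_2) : x + x = 0.
Proof. have h := pchar_Fp (p:=2) isT. by rewrite -mulr2n -mulr_natr (pcharf0 h) mulr0. Qed.
Lemma vaddvv r (v : vec r) : v + v = 0.
Proof. by apply/matrixP=> i j; rewrite !mxE addFF. Qed.
Lemma vaddK r (u v : vec r) : u + v + v = u.
Proof. by rewrite -addrA vaddvv addr0. Qed.
Lemma vaddKl r (u v : vec r) : v + (v + u) = u.
Proof. by rewrite addrA vaddvv add0r. Qed.
Lemma vadd_eq0 r (u v : vec r) : (u + v == 0) = (u == v).
Proof. apply/eqP/eqP => [h|->]; last exact: vaddvv.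
by rewrite -(vaddK u v) h add0r. Qed.

Section Sum4.
Variables (T : finType) (R : Type) (idx : R) (op : Monoid.com_law idx).
Lemma set4E (a b c d : T) : [set a; b; c; d] = a |: (b |: (c |: [set d])).
Proof. by apply/setP=> p; rewrite !inE !orbA. Qed.
Lemma sum4 (a b c d : T) (F : T -> R) : uniq [:: a; b; c; d] ->
  \big[op/idx]_(p in [set a; b; c; d]) F p = op (F a) (op (F b) (op (F c) (F d))).
Proof.
rewrite set4E /= !inE !negb_or => /and4P[/and3P[ab ac ad] /andP[bc bd] cd _].
rewrite big_setU1 ?inE ?negb_or ?ab ?ac ?ad //.
rewrite big_setU1 ?inE ?negb_or ?bc ?bd //.
by rewrite big_setU1 ?inE ?cd // big_set1.
Qed.
End Sum4.
Lemma sum4v (T : finType) (V : nmodType) (a b c d : T) (F : T -> V) : uniq [:: a; b; c; d] ->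
  \sum_(p in [set a; b; c; d]) F p = F a + (F b + (F c + F d)).
Proof. exact: sum4. Qed.
Lemma sum4n (T : finType) (a b c d : T) (F : T -> nat) : uniq [:: a; b; c; d] ->
  (\sum_(p in [set a; b; c; d]) F p = F a + (F b + (F c + F d)))%N.
Proof. exact: sum4. Qed.
Lemma vadd0_eq r (u w : vec r) : u + w = 0 -> w = u.
Proof. by move=> e; rewrite -(vaddKl w u) e addr0. Qed.
Lemma eq_addr_self r (u t : vec r) : (u == u + t) = (t == 0).
Proof. by rewrite -vadd_eq0 vaddKl. Qed.
Lemma set4_12 (T : finType) (a b c d : T) : [set a; b; c; d] = [set b; a; c; d].
Proof. by apply/setP=> p; rewrite !inE; do ![case: eqP => ?]. Qed.
Lemma set4_23 (T : finType) (a b c d : T) : [set a; b; c; d] = [set a; c; b; d].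
Proof. by apply/setP=> p; rewrite !inE; do ![case: eqP => ?]. Qed.
Lemma set4_34 (T : finType) (a b c d : T) : [set a; b; c; d] = [set a; b; d; c].
Proof. by apply/setP=> p; rewrite !inE; do ![case: eqP => ?]. Qed.
Lemma uniq3 (T : eqType) (a b c : T) : uniq [:: a; b; c] = [&& a != b, a != c & b != c].
Proof. by rewrite /= !inE !negb_or andbT andbA. Qed.
Lemma uniq4 (T : eqType) (a b c d : T) :
  uniq [:: a; b; c; d] = [&& a != b, a != c, a != d, b != c, b != d & c != d].
Proof. by rewrite /= !inE !negb_or andbT !andbA. Qed.
Lemma imset4 (T U : finType) (f : T -> U) (a b c d : T) :
  f @: [set a; b; c; d] = [set f a; f b; f c; f d].
Proof. by rewrite !imsetU !imset_set1. Qed.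
Lemma count_aut (T : finType) (g : {perm T}) (S : {set {set T}}) :
  (forall Q : {set T}, Q \in S -> g @: Q \in S) -> forall Q : {set T}, (g @: Q \in S) = (Q \in S).
Proof.
move=> h.
have inj : injective (fun A : {set T} => g @: A) by apply: imset_inj; exact: perm_inj.
have E : [set g @: A | A : {set T} in S] = S.
  apply/eqP; rewrite eqEcard card_imset // leqnn andbT.
  by apply/subsetP=> Q /imsetP[A AS ->]; apply: h.
move=> Q; rewrite -{1}E.
exact: (mem_imset S Q inj).
Qed.


Section F.
Variables (r : nat) (tau : {perm vec r}).
Hypothesis tau0 : tau 0 = 0.

Definition ti : vec r -> vec r := (tau^-1)%g.
Lemma tiK x : ti (tau x) = x. Proof. by rewrite /ti permK. Qed.
Lemma tauK x : tau (ti x) = x. Proof. by rewrite /ti permKV. Qed.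
Lemma ti0 : ti 0 = 0. Proof. by rewrite -{1}tau0 tiK. Qed.
Lemma tau_eq0 x : (tau x == 0) = (x == 0).
Proof. by rewrite -{1}tau0 (inj_eq perm_inj). Qed.
Lemma ti_eq0 x : (ti x == 0) = (x == 0).
Proof. by rewrite -{1}ti0 (inj_eq perm_inj). Qed.

Definition fp (x y z : point r) : point r :=
  match x, y, z with
  | inl a, inl b, inl c => inl (a + b + c)
  | inr a, inr b, inr c => inr (a + b + c)
  | inl a, inl c, inr b | inl a, inr b, inl c | inr b, inl a, inl c => inr (b + tau (a + c))
  | inr b, inr d, inl a | inr b, inl a, inr d | inl a, inr b, inr d => inl (a + ti (b + d))
  end.

Definition lv (p : point r) : vec r := if p is inl v then v else 0.
Definition rv (p : point r) : vec r := if p is inr v then v else 0.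
Definition nl (p : point r) : nat := if p is inl _ then 1%N else 0%N.

Definition sL (Q : {set point r}) := \sum_(p in Q) lv p.
Definition sR (Q : {set point r}) := \sum_(p in Q) rv p.
Definition cL (Q : {set point r}) := (\sum_(p in Q) nl p)%N.

Lemma inl_eq (a b : vec r) : (inl a == inl b :> point r) = (a == b). Proof. by []. Qed.
Lemma inr_eq (a b : vec r) : (inr a == inr b :> point r) = (a == b). Proof. by []. Qed.
Lemma inlr_eq (a b : vec r) : (inl a == inr b :> point r) = false. Proof. by []. Qed.
Lemma inrl_eq (a b : vec r) : (inr a == inl b :> point r) = false. Proof. by []. Qed.

Lemma inv_SQS Q : Q \in SQS tau ->
   [\/ cL Q = 4%N /\ sL Q = 0, cL Q = 0%N /\ sR Q = 0 | cL Q = 2%N /\ tau (sL Q) = sR Q].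
Proof.
rewrite /SQS !in_setU => /orP[/orP[]|].
- rewrite /Q0 in_set.
  case/existsP=> a /existsP[b /existsP[c /existsP[d /and3P[D s /eqP->]]]].
  move: D; rewrite /distinct4 => /and5P[ab ac ad bc /andP[bd cd]].
  have U : uniq [:: inl a; inl b; inl c; inl d : point r].
    by rewrite [uniq _]/= !inE !negb_or !inl_eq ab ac ad bc bd cd.
  constructor 1.
  rewrite /cL /sL sum4n // sum4v // /=.
  by rewrite !addrA; split; [by [] | exact/eqP].
- rewrite /Q1 in_set.
  case/existsP=> a /existsP[b /existsP[c /existsP[d /and3P[D s /eqP->]]]].
  move: D; rewrite /distinct4 => /and5P[ab ac ad bc /andP[bd cd]].
  have U : uniq [:: inr a; inr b; inr c; inr d : point r].
    by rewrite [uniq _]/= !inE !negb_or !inr_eq ab ac ad bc bd cd.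
  constructor 2.
  rewrite /cL /sR sum4n // sum4v // /=.
  by rewrite !addrA; split; [by [] | exact/eqP].
- rewrite /Qtau in_set.
  case/existsP=> a /existsP[b /existsP[c /existsP[d /and3P[/eqP e nz /eqP->]]]].
  have U : uniq [:: inl a; inl c; inr b; inr d : point r].
    rewrite [uniq _]/= !inE !negb_or !inl_eq !inr_eq !inlr_eq /= andbT.
    by rewrite -[a == c]vadd_eq0 -tau_eq0 e nz -vadd_eq0 nz.
  constructor 3.
  rewrite /cL /sR /sL sum4n // !sum4v // /=.
  rewrite !addr0 !add0r.
  by split; [by [] | exact: e].
Qed.

Lemma F2s x y z w : uniq [:: x; y; z; w] -> [set x; y; z; w] \in SQS tau -> w = fp x y z.
Proof.
move=> U /inv_SQS; rewrite /cL /sL /sR sum4n // !sum4v //.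
case: x U => x; case: y => y; case: z => z; case: w => w U /=; rewrite ?addr0 ?add0r;
  case => -[n e] //; f_equal.
all: first [ by apply: vadd0_eq; rewrite !addrA in e | by rewrite e vaddKl | by rewrite -e tiK vaddKl ].
Qed.

Lemma Q0P a b c d : distinct4 a b c d -> a + b + c + d = 0 ->
  [set inl a; inl b; inl c; inl d] \in SQS tau.
Proof.
move=> D s; rewrite /SQS !in_setU; apply/orP; left; apply/orP; left.
rewrite /Q0 in_set.
apply/existsP; exists a; apply/existsP; exists b; apply/existsP; exists c; apply/existsP; exists d.
rewrite D s !eqxx. exact: isT.
Qed.
Lemma Q1P a b c d : distinct4 a b c d -> a + b + c + d = 0 ->
  [set inr a; inr b; inr c; inr d] \in SQS tau.
Proof.
move=> D s; rewrite /SQS !in_setU; apply/orP; left; apply/orP; right.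
rewrite /Q1 in_set.
apply/existsP; exists a; apply/existsP; exists b; apply/existsP; exists c; apply/existsP; exists d.
rewrite D s !eqxx. exact: isT.
Qed.
Lemma QtP a c b d : tau (a + c) = b + d -> b + d != 0 ->
  [set inl a; inl c; inr b; inr d] \in SQS tau.
Proof.
move=> e nz; rewrite /SQS !in_setU; apply/orP; right.
rewrite /Qtau in_set.
apply/existsP; exists a; apply/existsP; exists b; apply/existsP; exists c; apply/existsP; exists d.
rewrite e nz !eqxx. exact: isT.
Qed.

Lemma e1 (a b c : vec r) : (a == a + b + c) = (b == c).
Proof. by rewrite -addrA eq_addr_self vadd_eq0. Qed.
Lemma e2 (a b c : vec r) : (b == a + b + c) = (a == c).
Proof. by rewrite (addrC a) e1. Qed.
Lemma e3 (a b c : vec r) : (c == a + b + c) = (a == b).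
Proof. by rewrite (addrC (a + b)) eq_addr_self vadd_eq0. Qed.
Lemma tne (a c b : vec r) : (b + (b + tau (a + c)) != 0) = (a != c).
Proof. by rewrite vaddKl tau_eq0 vadd_eq0. Qed.
Lemma tine (a b d : vec r) : (a + (a + ti (b + d)) == 0) = (b == d).
Proof. by rewrite vaddKl ti_eq0 vadd_eq0. Qed.

Lemma L1 x y z : uniq [:: x; y; z] ->
  uniq [:: x; y; z; fp x y z] /\ [set x; y; z; fp x y z] \in SQS tau.
Proof.
rewrite uniq4 uniq3.
case: x => a; case: y => b; case: z => c; rewrite [fp _ _ _]/=.
all: rewrite ?inl_eq ?inr_eq ?inlr_eq ?inrl_eq ?andbT ?andTb ?andbF ?andFb.
- case/and3P=> ab ac bc; rewrite e1 e2 e3 ab ac bc; split; first exact: isT.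
  apply: Q0P; last exact: vaddvv.
  rewrite /distinct4 e1 e2 e3 ab ac bc; exact: isT.
- move=> ab; rewrite eq_addr_self tau_eq0 vadd_eq0 ab; split; first exact: isT.
  apply: QtP; [exact: (esym (vaddKl _ _)) | by rewrite tne].
- move=> ac; rewrite eq_addr_self tau_eq0 vadd_eq0 ac; split; first exact: isT.
  rewrite set4_23; apply: QtP; [exact: (esym (vaddKl _ _)) | by rewrite tne].
- move=> bc; rewrite eq_addr_self ti_eq0 vadd_eq0 bc; split; first exact: isT.
  rewrite set4_34 set4_23; apply: QtP; [by rewrite vaddKl tauK | by rewrite vadd_eq0].
- move=> bc; rewrite eq_addr_self tau_eq0 vadd_eq0 bc; split; first exact: isT.
  rewrite set4_12 set4_23; apply: QtP; [exact: (esym (vaddKl _ _)) | by rewrite tne].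
- move=> ac; rewrite eq_addr_self ti_eq0 vadd_eq0 ac; split; first exact: isT.
  rewrite set4_12 set4_34 set4_23; apply: QtP; [by rewrite vaddKl tauK | by rewrite vadd_eq0].
- move=> ab; rewrite eq_addr_self ti_eq0 vadd_eq0 ab; split; first exact: isT.
  rewrite set4_23 set4_12 set4_34 set4_23; apply: QtP; [by rewrite vaddKl tauK | by rewrite vadd_eq0].
- case/and3P=> ab ac bc; rewrite e1 e2 e3 ab ac bc; split; first exact: isT.
  apply: Q1P; last exact: vaddvv.
  rewrite /distinct4 e1 e2 e3 ab ac bc; exact: isT.
Qed.

Definition fcomm (g : point r -> point r) :=
  forall x y z, uniq [:: x; y; z] -> g (fp x y z) = fp (g x) (g y) (g z).

Lemma aut_fcomm (g : {perm point r}) : is_automorphism tau g -> fcomm g.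
Proof.
move=> ag x y z U; have [U4 S] := L1 U.
have S' := S; rewrite -ag imset4 in S'.
have U' : uniq [:: g x; g y; g z; g (fp x y z)].
  by rewrite -(map_inj_uniq (@perm_inj _ g)) in U4.
exact: F2s U' S'.
Qed.

Lemma L2 Q : Q \in SQS tau -> exists x y z, uniq [:: x; y; z] /\ Q = [set x; y; z; fp x y z].
Proof.
rewrite /SQS !in_setU => /orP[/orP[]|].
- rewrite /Q0 in_set.
  case/existsP=> a /existsP[b /existsP[c /existsP[d /and3P[D /eqP s /eqP->]]]].
  move: D; rewrite /distinct4 => /and5P[ab ac ad bc /andP[bd cd]].
  exists (inl a), (inl b), (inl c); rewrite uniq3 !inl_eq ab ac bc; split; first exact: isT.
  by rewrite [fp _ _ _]/= (vadd0_eq s).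
- rewrite /Q1 in_set.
  case/existsP=> a /existsP[b /existsP[c /existsP[d /and3P[D /eqP s /eqP->]]]].
  move: D; rewrite /distinct4 => /and5P[ab ac ad bc /andP[bd cd]].
  exists (inr a), (inr b), (inr c); rewrite uniq3 !inr_eq ab ac bc; split; first exact: isT.
  by rewrite [fp _ _ _]/= (vadd0_eq s).
- rewrite /Qtau in_set.
  case/existsP=> a /existsP[b /existsP[c /existsP[d /and3P[/eqP e nz /eqP->]]]].
  exists (inl a), (inl c), (inr b); rewrite uniq3 inl_eq inlr_eq.
  rewrite -[a == c]vadd_eq0 -tau_eq0 e nz; split; first exact: isT.
  by rewrite [fp _ _ _]/= e vaddKl.
Qed.

Lemma fcomm_aut (g : {perm point r}) : fcomm g -> is_automorphism tau g.
Proof.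
move=> fg; apply: count_aut => Q /L2[x [y [z [U ->]]]].
rewrite imset4 fg //; apply: (proj2 (L1 _)).
by move: U; rewrite -(map_inj_uniq (@perm_inj _ g)); exact: id.
Qed.
End F.


Lemma F2_cases (c : 'F_2) : c = 0 \/ c = 1.
Proof. by case: c => [[|[|k]] hk]; [left|right|]; try apply/val_inj. Qed.

Lemma additive_mx r (h : vec r -> vec r) : (forall x y, h (x + y) = h x + h y) ->
  exists M : 'M['F_2]_r, forall x, h x = M *m x.
Proof.
move=> hD.
have h0 : h 0 = 0.
  have e := hD 0 0; rewrite addr0 in e.
  have := congr1 (fun v => v + h 0) e; rewrite /= vaddvv add0r; exact: esym.
have hZ c x : h (c *: x) = c *: h x.
  by case: (F2_cases c) => ->; rewrite ?scale0r ?scale1r.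
exists (\matrix_(i, j) (h (delta_mx j 0)) i 0) => x.
apply/matrixP => i k; rewrite (ord1 k) !mxE.
rewrite {1}[x]matrix_sum_delta (big_morph h hD h0).
rewrite summxE; apply: eq_bigr => j _.
rewrite big_ord1 hZ !mxE mulrC; done.
Qed.

Lemma additive_inj_mx r (h : vec r -> vec r) : (forall x y, h (x + y) = h x + h y) ->
  injective h -> exists2 M : 'M['F_2]_r, M \in unitmx & forall x, h x = M *m x.
Proof.
move=> hD hI.
have [h' hK h'K] := injF_bij hI.
have h'D x y : h' (x + y) = h' x + h' y.
  by apply: hI; rewrite hD !h'K.
have [M HM] := additive_mx hD.
have [M' HM'] := additive_mx h'D.
exists M => //.
have E : M *m M' = 1%:M.
  apply/matrixP => i j.
  have := h'K (delta_mx j 0); rewrite HM' HM mulmxA => e.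
  have := congr1 (fun v : vec r => v i 0) e.
  rewrite -colE !mxE eqxx andbT => ->; exact: erefl.
by case: (mulmx1_unit E).
Qed.


Section G.
Variables (r : nat) (tau : {perm vec r}).
Hypothesis tau0 : tau 0 = 0.

Definition trans (u v : vec r) (p : point r) : point r :=
  match p with inl x => inl (x + u) | inr y => inr (y + v) end.
Lemma trans_inj u v : injective (trans u v).
Proof. by apply: (can_inj (g := trans u v)) => -[x|y] /=; rewrite vaddK. Qed.
Lemma P2 (a c u : vec r) : (a + u) + (c + u) = a + c.
Proof. by rewrite addrACA vaddvv addr0. Qed.

Lemma fcomm_trans u v : fcomm tau (trans u v).
Proof.
move=> x y z _; case: x => a; case: y => b; case: z => c; rewrite [fp _ _ _ _]/= /= ?P2.
all: f_equal; first [exact: addrAC | exact: (esym (addrA _ _ _))].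
Qed.

Definition sw (P R : vec r -> vec r) (p : point r) : point r :=
  match p with inl x => inr (P x) | inr y => inl (R y) end.
Lemma sw_inj P R : injective P -> injective R -> injective (sw P R).
Proof.
move=> iP iR [x|x] [y|y] //= e.
- by case: e => /iP ->.
- by case: e => /iR ->.
Qed.

Lemma fcomm_sw P R : (forall x y, P (x + y) = P x + P y) -> (forall x y, R (x + y) = R x + R y) ->
  (forall y, tau (R (tau y)) = P y) -> fcomm tau (sw P R).
Proof.
move=> PD RD H.
have H1 y : ti tau (P y) = R (tau y) by rewrite -H tiK.
have H2 e : P (ti tau e) = tau (R e) by rewrite -H tauK.
move=> x y z _; case: x => a; case: y => b; case: z => c; rewrite [fp _ _ _ _]/= /=.
all: rewrite -?RD -?H2 -?PD ?H1 -?RD; exact: erefl.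
Qed.

Lemma fcomm_comp f g : fcomm tau f -> fcomm tau g -> injective g -> fcomm tau (f \o g).
Proof.
move=> ff fg ig x y z U /=; rewrite fg // ff //.
by rewrite -(map_inj_uniq ig) in U.
Qed.

Lemma fcomm_inv (g : {perm point r}) : fcomm tau g -> fcomm tau (g^-1)%g.
Proof.
move=> fg x y z U; apply: (@perm_inj _ g); rewrite permKV fg ?permKV //.
by rewrite -(map_inj_uniq (@perm_inj _ (g^-1)%g)) in U.
Qed.

Lemma easy (A B : 'M['F_2]_r) : A \in unitmx -> B \in unitmx ->
  (forall x, (tau^-1)%g x = A *m tau (B *m x)) -> point_transitive tau.
Proof.
move=> uA uB H.
pose P (x : vec r) : vec r := invmx B *m x.
pose R (y : vec r) : vec r := A *m y.
have PD x y : P (x + y) = P x + P y by rewrite /P mulmxDr.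
have RD x y : R (x + y) = R x + R y by rewrite /R mulmxDr.
have iP : injective P by move=> x y; rewrite /P => /(congr1 (mulmx B)); rewrite !mulKVmx.
have iR : injective R by move=> x y; rewrite /R => /(congr1 (mulmx (invmx A))); rewrite !mulKmx.
have HPR y : tau (R (tau y)) = P y.
  have := H (P y); rewrite /P mulKVmx // -/(R _) => <-; exact: tauK.
have fs := fcomm_sw PD RD HPR.
have iS := sw_inj iP iR.
have aut_tr u v : is_automorphism tau (perm (@trans_inj u v)).
  by apply: fcomm_aut => // x y z U; rewrite !permE; apply: fcomm_trans.
have aut_c u v : is_automorphism tau (perm (inj_comp (@trans_inj u v) iS)).
  apply: fcomm_aut => // x y z U; rewrite !permE.
  exact: (fcomm_comp (fcomm_trans u v) fs iS).
move=> [a|a] [b|b].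
- by exists (perm (@trans_inj (a + b) 0)); split => //; rewrite permE /= vaddKl.
- by exists (perm (inj_comp (@trans_inj 0 (P a + b)) iS)); split => //; rewrite permE /= vaddKl.
- by exists (perm (inj_comp (@trans_inj (R a + b) 0) iS)); split => //; rewrite permE /= vaddKl.
- by exists (perm (@trans_inj 0 (a + b))); split => //; rewrite permE /= vaddKl.
Qed.

Lemma add_of3 (h : vec r -> vec r) : h 0 = 0 ->
  (forall x1 x2 x3, uniq [:: x1; x2; x3] -> h (x1 + x2 + x3) = h x1 + h x2 + h x3) ->
  forall x y, h (x + y) = h x + h y.
Proof.
move=> h0 H x y.
case: (eqVneq x y) => [->|xy]; first by rewrite !vaddvv h0.
case: (eqVneq x 0) => [->|x0]; first by rewrite h0 !add0r.
case: (eqVneq y 0) => [->|y0]; first by rewrite h0 !addr0.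
have := H x y 0; rewrite !addr0 h0 addr0; apply.
by rewrite uniq3 xy x0 y0.
Qed.

Lemma caseB (g : {perm point r}) a c : fcomm tau g -> g (inl 0) = inr 0 -> g (inl a) = inl c ->
  forall x y, tau (x + y) = tau x + tau y.
Proof.
move=> fg g0 ga.
have a0 : a != 0 by apply/eqP => a0; move: ga; rewrite a0 g0.
pose phi := trans a (tau a).
have phiE w : phi w = fp tau (inl 0) (inl a) w.
  by case: w => [e|b] /=; rewrite add0r ?(addrC e).
pose psi := (g \o phi) \o (g^-1)%g.
have fpsi : fcomm tau psi.
  apply: fcomm_comp; last exact: perm_inj.
    apply: fcomm_comp => //; [exact: fcomm_trans | exact: trans_inj].
  exact: fcomm_inv.
have psiE e : psi (inl e) = inr (tau (c + e)).
  case: (eqVneq e c) => [->|ec].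
    rewrite /psi /=.
    have -> : (g^-1)%g (inl c) = inl a by rewrite -ga permK.
    rewrite /phi /= !vaddvv g0 tau0; exact: erefl.
  rewrite /psi /=; set w := (g^-1)%g (inl e).
  have gw : g w = inl e by rewrite /w permKV.
  rewrite phiE fg; last first.
    rewrite uniq3 inl_eq eq_sym a0 /=; apply/andP; split.
      apply/eqP => h; have := congr1 g h; rewrite g0 gw; discriminate.
    apply/eqP => h; have := congr1 g h; rewrite ga gw => -[] /esym/eqP; rewrite (negbTE ec); discriminate.
  rewrite g0 ga gw /= add0r; exact: erefl.
have T3 x1 x2 x3 : uniq [:: x1; x2; x3] -> tau (x1 + x2 + x3) = tau x1 + tau x2 + tau x3.
  move=> U.
  have := fpsi (inl (x1 + c)) (inl (x2 + c)) (inl (x3 + c)).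
  rewrite uniq3 !inl_eq !(inj_eq (addIr c)) -uniq3 => /(_ U).
  rewrite /= !psiE.
  have E x : c + (x + c) = x by rewrite addrC vaddK.
  rewrite !E.
  have -> : c + (x1 + c + (x2 + c) + (x3 + c)) = x1 + x2 + x3.
    by rewrite P2 addrC addrA vaddK.
  by case.
exact: add_of3 tau0 T3.
Qed.

Lemma linear_case : (forall x y, tau (x + y) = tau x + tau y) ->
  exists A B : 'M['F_2]_r,
    [/\ A \in unitmx, B \in unitmx & forall x : vec r, (tau^-1)%g x = A *m tau (B *m x)].
Proof.
move=> tD.
have tiD x y : ti tau (x + y) = ti tau x + ti tau y.
  by apply: (@perm_inj _ tau); rewrite tD !tauK.
pose h x := ti tau (ti tau x).
have hD x y : h (x + y) = h x + h y by rewrite /h !tiD.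
have hI : injective h by move=> x y; rewrite /h /ti => /perm_inj/perm_inj.
have [A uA HA] := additive_inj_mx hD hI.
exists A, 1%:M; split => //; first exact: unitmx1.
move=> x; rewrite mul1mx -HA /h tiK; exact: erefl.
Qed.

Lemma caseA (g : {perm point r}) : fcomm tau g -> g (inl 0) = inr 0 ->
  (forall a, exists b, g (inl a) = inr b) ->
  exists A B : 'M['F_2]_r,
    [/\ A \in unitmx, B \in unitmx & forall x : vec r, (tau^-1)%g x = A *m tau (B *m x)].
Proof.
move=> fg g0 H.
pose P a := rv (g (inl a)).
have gP a : g (inl a) = inr (P a) by case: (H a) => b; rewrite /P => ->.
have iP : injective P.
  by move=> x y e; have := gP x; rewrite e -gP => /perm_inj [].
have gQ b : exists c, g (inr b) = inl c.
  case E: (g (inr b)) => [c|b']; first by exists c.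
  have [Pi PK PiK] := injF_bij iP.
  have := gP (Pi b'); rewrite PiK -E => /perm_inj; discriminate.
pose Q b := lv (g (inr b)).
have gQ' b : g (inr b) = inl (Q b) by case: (gQ b) => c; rewrite /Q => ->.
have iQ : injective Q.
  by move=> x y e; have := gQ' x; rewrite e -gQ' => /perm_inj [].
have P0 : P 0 = 0 by have := gP 0; rewrite g0 => -[].
have PD : forall x y, P (x + y) = P x + P y.
  apply: add_of3 P0 _ => x1 x2 x3 U.
  have := fg (inl x1) (inl x2) (inl x3); rewrite uniq3 !inl_eq -uniq3 => /(_ U).
  by rewrite /= !gP /= => -[].
have QR b y : y != 0 -> Q (b + tau y) = Q b + ti tau (P y).
  move=> y0; have := fg (inl y) (inl 0) (inr b).
  rewrite uniq3 inl_eq y0 /= => /(_ isT).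
  by rewrite /= !gQ' !gP P0 /= !addr0 => -[].
pose Q' b := Q b + Q 0.
have Q'D x e : Q' (x + e) = Q' x + Q' e.
  case: (eqVneq e 0) => [->|e0]; first by rewrite /Q' !addr0 vaddvv addr0.
  have y0 : ti tau e != 0 by rewrite (ti_eq0 tau0).
  have h1 := QR x (ti tau e) y0; have h2 := QR 0 (ti tau e) y0.
  rewrite !tauK add0r in h1 h2.
  rewrite /Q' h1 h2 (addrAC (Q 0)) vaddvv add0r; exact: addrAC.
have iQ' : injective Q' by move=> x y; rewrite /Q' => /addIr/iQ.
have rel y : ti tau (P y) = Q' (tau y).
  case: (eqVneq y 0) => [->|y0]; first by rewrite P0 (ti0 tau0) tau0 /Q' vaddvv.
  by have := QR 0 y y0; rewrite add0r /Q' => ->; rewrite addrAC vaddvv add0r.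
have [Mp uP HMp] := additive_inj_mx PD iP.
have [A uA HA] := additive_inj_mx Q'D iQ'.
exists A, (invmx Mp); split => //; first by rewrite unitmx_inv.
move=> x; set z := invmx Mp *m x.
have E : P z = x by rewrite HMp /z mulKVmx.
rewrite -{1}E; exact: (etrans (rel z) (HA _)).
Qed.

Definition isl (p : point r) : bool := if p is inl _ then true else false.

Lemma hard : point_transitive tau ->
  exists A B : 'M['F_2]_r,
    [/\ A \in unitmx, B \in unitmx & forall x : vec r, (tau^-1)%g x = A *m tau (B *m x)].
Proof.
move=> pt; have [g [ag g0]] := pt (inl 0) (inr 0).
have fg := aut_fcomm tau0 ag.
case: (boolP [exists a, isl (g (inl a))]).
- case/existsP => a; case E: (g (inl a)) => [c|b] // _.
  exact: linear_case (caseB fg g0 E).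
- rewrite negb_exists => /forallP H.
  apply: (caseA fg g0) => a; move: (H a); case: (g (inl a)) => [c|b] //= _.
  by exists b.
Qed.
End G.


Unset Implicit Arguments.

Theorem corollary1 (r : nat) (hr : (0 < r)%N) (tau : {perm vec r})
    (htau0 : tau 0 = 0) :
  point_transitive tau <->
  exists A B : 'M['F_2]_r,
    [/\ A \in unitmx, B \in unitmx &
        forall x : vec r, (tau^-1)%g x = A *m tau (B *m x)].
Proof.
split; first exact: (hard htau0).
case=> A [B [uA uB H]]; exact: (easy htau0 uA uB H).
Qed.
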